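(* Let $p_i<p_j$ be primes and let $m\ge p_j^2$ be an integer, and put $M'=\lceil m(1-3/p_j)\rceil$. (a) If $p_i\ge 3$, then $N_m(\{p_i,p_j\})\ge N_{M'}(\{p_i\})$, i.e. $$\#\{1\le k\le m:\ p_i\nmid k(k+2),\ p_j\nmid k(k+2)\}\ \ge\ M'-\left\lfloor \tfrac{M'}{p_i}\right\rfloor-\left\lfloor \tfrac{M'+2}{p_i}\right\rfloor .$$ (b) If $p_i=2$ (so $p_j\ge 3$), then $N_m(\{2,p_j\})\ge N_{M'}(\{2\})$, i.e. $$\#\{1\le k\le m:\ k \text{ odd},\ p_j\nmid k(k+2)\}\ \ge\ M'-\left\lfloor \tfrac{M'}{2}\right\rfloor .$$
   Context: For a finite set $Q$ of primes and an integer $x\ge 0$, $N_x(Q)=\#\{k\in\{1,\dots,x\}:\ p\nmid k(k+2)\text{ for every }p\in Q\}$. (For $p=2$ the condition $2\nmid k(k+2)$ just says $k$ is odd; for odd $p$ one has $N_x(\{p\})=x-\lfloor x/p\rfloor-\lfloor (x+2)/p\rfloor$.) $\lfloor\cdot\rfloor,\lceil\cdot\rceil$ are floor and ceiling. *)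

(* Defs.v *)
From mathcomp Require Import all_boot.
Set Implicit Arguments. Unset Strict Implicit. Unset Printing Implicit Defensive.

Definition Ncount (x : nat) (Q : seq nat) : nat :=
  count (fun k => all (fun p => ~~ (p %| k * (k + 2))) Q) (iota 1 x).

Definition ceil_div (a b : nat) : nat := (a + b - 1) %/ b.

(* Main.v *)
Require Import Defs.
From mathcomp Require Import all_boot zify.


Lemma count_split (a b : pred nat) s :
  count (fun x => a x && b x) s + count (fun x => a x && ~~ b x) s = count a s.
Proof. elim: s => //= x s IH; case: (a x); case: (b x) => /=; lia. Qed.

Lemma count_or (a b c : pred nat) s :
  count (fun x => a x && (b x || c x)) s <=
  count (fun x => a x && b x) s + count (fun x => a x && c x) s.
Proof. elim: s => //= x s IH; case: (a x); case: (b x); case: (c x) => /=; lia. Qed.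

Lemma count_disj (A B : pred nat) s : (forall x, ~~ (A x && B x)) ->
  count (fun x => ~~ A x && ~~ B x) s + count A s + count B s = size s.
Proof.
move=> H; elim: s => //= x s IH; have := H x.
case: (A x); case: (B x) => /=; lia.
Qed.

Lemma countG d (P : pred nat) m : 0 < d ->
  count (fun k => (d %| k) && P k) (iota 1 m) = count (fun t => P (d * t)) (iota 1 (m %/ d)).
Proof.
move=> d0; elim: m => [|m IH]; first by rewrite div0n.
rewrite -[m.+1]addn1 iotaD count_cat IH addn1 divnS //.
case: (boolP (d %| m.+1)) => Hd.
  rewrite [true + _]addnC iotaD count_cat /= !addn0 !add1n Hd andTb.
  have -> : d * (m %/ d).+1 = m.+1.
    by rewrite -[in RHS](divnK Hd) mulnC divnS // Hd.
  by [].
by rewrite add0n /= (negbTE Hd) !addn0.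
Qed.

Lemma countG0 d m : 0 < d -> count (dvdn d) (iota 1 m) = m %/ d.
Proof.
move=> d0; rewrite (eq_count (a2 := fun k => (d %| k) && predT k)); last by move=> x; rewrite andbT.
by rewrite countG // (eq_count (a2 := predT)) // count_predT size_iota.
Qed.

Lemma count_shift (P : pred nat) a c n :
  count P (iota (c + a) n) = count (fun t => P (c + t)) (iota a n).
Proof. by rewrite iotaDl count_map. Qed.

Lemma count_class p c T : 0 < p ->
  count (fun t => p %| t + c) (iota 1 T) = (c + T) %/ p - c %/ p.
Proof.
move=> p0.
have E : count (dvdn p) (iota 1 (c + T)) = count (dvdn p) (iota 1 c) + count (dvdn p) (iota (1 + c) T) by rewrite iotaD count_cat.
rewrite !countG0 // in E.
rewrite E addnC addnK addnC count_shift.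
by apply: eq_count => t /=; rewrite addnC.
Qed.

Lemma L1 p q u a t : (q * u) %% p = 1 -> (p %| q * t + a) = (p %| t + a * u).
Proof.
move=> Hu.
have E1 : ((q * t + a) * u) %% p = (t + a * u) %% p.
  rewrite mulnDl -mulnA [t * u]mulnC mulnA -modnDml -modnMml Hu mul1n modnDml //.
have E2 : (q * (t + a * u)) %% p = (q * t + a) %% p.
  rewrite mulnDr mulnA [q * a]mulnC -mulnA -modnDmr -modnMmr Hu muln1 modnDmr //.
apply/idP/idP => H.
  by rewrite /dvdn -E1 -modnMml (eqP H) mul0n mod0n.
by rewrite /dvdn -E2 -modnMmr (eqP H) muln0 mod0n.
Qed.

Lemma stepS q m M T T' : 2 <= q -> q * q <= m -> q * M + 3 * m <= m * q + q - 1 ->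
  q * T <= m -> q * T' <= m + 2 -> M + T + T' + q <= m + 1.
Proof.
move=> q13 qm HM HT HT'.
have : q * (M + T + T' + q) < q * (m + 2).
  rewrite !mulnDr [m * q]mulnC in HM *. lia.
rewrite ltn_pmul2l; lia.
Qed.

Lemma stepP p s : 3 <= p -> 12 <= s -> 2 * s + 12 * p <= p * s + 24.
Proof.
move=> p3 s12.
have [r ->] : exists r, p = r + 3 by exists (p - 3); lia.
have [t ->] : exists t, s = t + 12 by exists (s - 12); lia.
rewrite !mulnDr !mulnDl; lia.
Qed.

Lemma arith_a p q m M T T' C F1 F2 Nm NM am am2 aM aM2 aT aT' :
  3 <= p -> 13 <= q -> q * q <= m -> q * M + 3 * m <= m * q + q - 1 ->
  q * T <= m -> q * T' <= m + 2 ->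
  Nm <= C + F1 + F2 -> F1 + 2 * aT <= T -> F2 + 2 * aT' <= T' ->
  Nm + am + am2 = m -> NM + aM + aM2 = M ->
  p * am <= m -> p * am2 <= 2 + m -> M < p * aM + p -> 2 + M < p * aM2 + p ->
  T < p * aT + p -> T' < p * aT' + p ->
  NM <= C.
Proof.
move=> p3 q13 qm HM HT HT' H1 H2 H3 H4 H5 b1 b2 b3 b4 b5 b6.
have S := @stepS q m M T T' (ltnW (leq_trans (isT : 2 < 13) q13)) qm HM HT HT'.
have K : p * (M + am + am2 + T + T') <= p * (m + aM + aM2 + 2 * aT + 2 * aT').
  have [s ms] : exists s, m = s + (M + T + T') by exists (m - (M + T + T')); lia.
  have s12 : 12 <= s by lia.
  have Ps := @stepP p s p3 s12.
  move: b1 b2; rewrite ms !mulnDr => b1 b2.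
  rewrite !muln0 !addn0.
  lia.
rewrite leq_pmul2l in K; lia.
Qed.
Lemma smallq q : prime q -> 3 < q -> q < 13 -> q = 5 \/ q = 7 \/ q = 11.
Proof.
move=> pq q3 q13.
have : q \in [seq x <- iota 4 9 | prime x] by rewrite mem_filter pq mem_iota; lia.
rewrite /= !inE => /or3P [] /eqP; auto.
Qed.
Lemma smallp p : prime p -> 2 < p -> p < 11 -> p = 3 \/ p = 5 \/ p = 7.
Proof.
move=> pq q3 q13.
have : p \in [seq x <- iota 3 8 | prime x] by rewrite mem_filter pq mem_iota; lia.
rewrite /= !inE => /or3P [] /eqP; auto.
Qed.

Definition okp p k := ~~ (p %| k) && ~~ (p %| k + 2).

Lemma okE p k : prime p -> ~~ (p %| k * (k + 2)) = okp p k.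
Proof. by move=> pp; rewrite Euclid_dvdM // negb_or. Qed.

Lemma N1E p x : prime p -> Ncount x [:: p] = count (okp p) (iota 1 x).
Proof. by move=> pp; rewrite /Ncount; apply: eq_count => k /=; rewrite andbT okE. Qed.

Lemma N2E p q x : prime p -> prime q ->
  Ncount x [:: p; q] = count (fun k => okp p k && okp q k) (iota 1 x).
Proof. by move=> pp pq; rewrite /Ncount; apply: eq_count => k /=; rewrite andbT !okE. Qed.

Lemma fam2 p q m : 3 <= q ->
  count (fun x => okp p x && (q %| x + 2)) (iota 1 m) =
  count (fun t => okp p (q * t - 2)) (iota 1 ((2 + m) %/ q)).
Proof.
move=> q3; rewrite -(@countG q (fun j => okp p (j - 2))); last lia.
rewrite iotaD count_cat.
have -> : count (fun k => (q %| k) && okp p (k - 2)) (iota 1 2) = 0.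
  rewrite /= dvdn1.
  have -> : (q %| 2) = false by apply/negP => /dvdn_leq; lia.
  have -> : (q == 1) = false by apply/eqP; lia.
  by [].
rewrite add0n [1 + 2]addnC count_shift.
by apply: eq_count => t /=; rewrite addKn andbC addnC.
Qed.

Lemma decomp p q m : 3 <= q ->
  count (okp p) (iota 1 m) <= count (fun k => okp p k && okp q k) (iota 1 m)
   + count (fun t => okp p (q * t)) (iota 1 (m %/ q))
   + count (fun t => okp p (q * t - 2)) (iota 1 ((2 + m) %/ q)).
Proof.
move=> q3; rewrite -(count_split (okp p) (okp q)) -addnA leq_add2l.
have -> : count (fun x => okp p x && ~~ okp q x) (iota 1 m) =
          count (fun x => okp p x && ((q %| x) || (q %| x + 2))) (iota 1 m).
  by apply: eq_count => x; rewrite /okp negb_and !negbK.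
apply: leq_trans (count_or _ _ _ _) _; apply: leq_add; last by rewrite fam2.
rewrite -(@countG q (okp p)); last lia.
by rewrite (eq_count (a2 := fun x => (q %| x) && okp p x)) // => x; rewrite andbC.
Qed.

Lemma count_two p c T : prime p -> ~~ (p %| c) ->
  count (fun t => ~~ (p %| t) && ~~ (p %| t + c)) (iota 1 T) + T %/ p + ((c + T) %/ p - c %/ p) = T.
Proof.
move=> pp nc; have p0 := prime_gt0 pp.
rewrite -countG0 // -count_class // -[X in _ = X](size_iota 1 T).
apply: count_disj => x; apply/negP => /andP [h1 h2].
by move: h2; rewrite dvdn_addr // (negbTE nc).
Qed.

Lemma count_one p c T : 0 < p -> p %| c ->
  count (fun t => ~~ (p %| t) && ~~ (p %| t + c)) (iota 1 T) + T %/ p = T.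
Proof.
move=> p0 hc; rewrite -countG0 // -[X in _ = X](size_iota 1 T) -(count_predC (dvdn p)) addnC.
congr (_ + _); apply: eq_count => t /=; by rewrite dvdn_addl // andbb.
Qed.

Lemma famE p q u T T' : prime p -> 2 <= q -> coprime p q -> (q * u) %% p = 1 ->
  count (fun t => okp p (q * t)) (iota 1 T) = count (fun t => ~~ (p %| t) && ~~ (p %| t + 2 * u)) (iota 1 T) /\
  count (fun t => okp p (q * t - 2)) (iota 1 T') = count (fun t => ~~ (p %| t) && ~~ (p %| t + (p - 2) * u)) (iota 1 T').
Proof.
move=> pp q2 cpq hu; have p2 := prime_gt1 pp; split.
  apply: eq_count => t; by rewrite /= /okp (@Gauss_dvdr p q t cpq) (L1 p q u 2 t hu).
apply: eq_in_count => t; rewrite mem_iota => /andP [t1 _].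
have qt : 2 <= q * t by nia.
rewrite /okp subnK // andbC (@Gauss_dvdr p q t cpq).
rewrite -(dvdn_addl (q * t - 2) (dvdnn p)).
have -> : q * t - 2 + p = q * t + (p - 2) by lia.
by rewrite (L1 p q u (p - 2) t hu).
Qed.

Lemma aux1 F T a X : F + a + X = T -> a <= X -> F + 2 * a <= T.
Proof. lia. Qed.

Lemma inv_ex p q : prime p -> prime q -> p < q -> exists u, (q * u) %% p = 1.
Proof.
move=> pp pq pq_lt.
have cqp : coprime q p by rewrite prime_coprime //; apply/negP => /(dvdn_leq (prime_gt0 pp)); lia.
have q0 := prime_gt0 pq; have p1 := prime_gt1 pp.
case/(coprimeP _ q0): cqp => [[a b] /= E].
exists a; have -> : q * a = b * p + 1 by lia.
by rewrite modnMDl modn_small.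
Qed.

Lemma dbounds x p : 0 < p -> p * (x %/ p) <= x /\ x < p * (x %/ p) + p.
Proof. move=> p0; have := divn_eq x p; have := ltn_pmod x p0; lia. Qed.

Lemma divD_ge c T p : 0 < p -> T %/ p <= (c + T) %/ p - c %/ p.
Proof. by move=> p0; rewrite divnD //; lia. Qed.

Theorem lemma4p3 (pi pj m : nat) :
  prime pi -> prime pj -> pi < pj -> pj ^ 2 <= m ->
  let M' := ceil_div (m * pj - 3 * m) pj in
  (3 <= pi -> Ncount m [:: pi; pj] >= Ncount M' [:: pi]) /\
  (pi = 2 -> Ncount m [:: 2; pj] >= Ncount M' [:: 2]).
Proof.
move=> pp pq pij hm M'.
have p2 := prime_gt1 pp.
have q3 : 3 <= pj by lia.
have q0 : 0 < pj by lia.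
have [u hu] := inv_ex pi pj pp pq pij.
have cpq : coprime pi pj by rewrite coprime_sym; apply: modn_coprime => //; exists u.
have D := @decomp pi pj m q3.
have [E1 E2] := @famE pi pj u (m %/ pj) ((2 + m) %/ pj) pp (ltnW q3) cpq hu.
rewrite E1 E2 in D; clear E1 E2.
have [hT _] := dbounds m pj q0.
have [hT' _] := dbounds (2 + m) pj q0.
have hM : pj * M' + 3 * m <= m * pj + pj - 1.
  have [h _] := dbounds (m * pj - 3 * m + pj - 1) pj q0.
  have : 3 * m <= m * pj by rewrite mulnC leq_mul2l q3 orbT.
  rewrite /M' /ceil_div; lia.
have qm : pj * pj <= m by move: hm; rewrite -mulnn.
have hT2 : pj * ((2 + m) %/ pj) <= m + 2 by rewrite [m + 2]addnC.
have S := @stepS pj m M' (m %/ pj) ((2 + m) %/ pj) (ltnW q3) qm hM hT hT2.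
split.
- move=> p3.
  have p0 : 0 < pi by lia.
  have nu : ~~ (pi %| u).
    apply/negP => hd.
    have : pi %| pj * u by apply: dvdn_mull.
    by rewrite /dvdn hu.
  have c1 : ~~ (pi %| 2 * u) by rewrite Euclid_dvdM // negb_or nu andbT; apply/negP => /dvdn_leq; lia.
  have c2 : ~~ (pi %| (pi - 2) * u) by rewrite Euclid_dvdM // negb_or nu andbT; apply/negP => /dvdn_leq; lia.
  have c0 : ~~ (pi %| 2) by apply/negP => /dvdn_leq; lia.
  have F1e := count_two pi (2 * u) (m %/ pj) pp c1.
  have F2e := count_two pi ((pi - 2) * u) ((2 + m) %/ pj) pp c2.
  have Nme : count (okp pi) (iota 1 m) + m %/ pi + ((2 + m) %/ pi - 2 %/ pi) = m := count_two pi 2 m pp c0.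
  have NMe : count (okp pi) (iota 1 M') + M' %/ pi + ((2 + M') %/ pi - 2 %/ pi) = M' := count_two pi 2 M' pp c0.
  rewrite N1E // N2E //.
  have g1 := @divD_ge (2 * u) (m %/ pj) pi p0.
  have g2 := @divD_ge ((pi - 2) * u) ((2 + m) %/ pj) pi p0.
  have d2 : 2 %/ pi = 0 by rewrite divn_small.
  case: (leqP 13 pj) => q13.
    have [b1 _] := dbounds m pi p0.
    have [b2 _] := dbounds (2 + m) pi p0.
    have [_ b3] := dbounds M' pi p0.
    have [_ b4] := dbounds (2 + M') pi p0.
    have [_ b5] := dbounds (m %/ pj) pi p0.
    have [_ b6] := dbounds ((2 + m) %/ pj) pi p0.
    rewrite d2 subn0 in Nme; rewrite d2 subn0 in NMe.
    have H2 := @aux1 _ _ _ _ F1e g1.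
    have H3 := @aux1 _ _ _ _ F2e g2.
    exact: (@arith_a pi pj m M' (m %/ pj) ((2 + m) %/ pj) _ _ _ (count (okp pi) (iota 1 m)) _
       (m %/ pi) ((2 + m) %/ pi) (M' %/ pi) ((2 + M') %/ pi) ((m %/ pj) %/ pi) (((2 + m) %/ pj) %/ pi)
       p3 q13 qm hM hT hT2 D H2 H3 Nme NMe b1 b2 b3 b4 b5 b6).
  have hq := smallq pj pq (leq_ltn_trans p3 pij) q13.
  have hp : pi < 11 by move: hq pij; clear; lia.
  have {}hp := smallp pi pp p3 hp.
  move: pij hu D F1e F2e Nme NMe hm; rewrite /M' /ceil_div.
  case: hq => [->|[->|->]]; case: hp => [->|[->|->]]; clear; move=> *; lia.
- move=> p2'; subst pi.
  have F1e := @count_one 2 (2 * u) (m %/ pj) isT (dvdn_mulr _ (dvdnn 2)).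
  have F2e := @count_one 2 ((2 - 2) * u) ((2 + m) %/ pj) isT (dvdn0 2).
  have Nme : count (okp 2) (iota 1 m) + m %/ 2 = m := @count_one 2 2 m isT (dvdnn 2).
  have NMe : count (okp 2) (iota 1 M') + M' %/ 2 = M' := @count_one 2 2 M' isT (dvdnn 2).
  rewrite N1E // N2E //.
  case: (leqP 5 pj) => q5.
    move: S D F1e F2e Nme NMe q5; clearbody M'.
    generalize (m %/ pj) ((2 + m) %/ pj) => T T'.
    clear; move=> *; lia.
  have E3 : pj = 3.
    have : pj = 3 \/ pj = 4 by move: q5 q3; clear; lia.
    by case=> // E4; move: pq; rewrite E4.
  move: D F1e F2e Nme NMe; rewrite /M' /ceil_div E3; clear; move=> *; lia.
Qed.
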